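(* Let $S$ be a $D_{1,6}$-polarized Enriques surface and $\mathcal{R}=\{R_1,\ldots,R_{12}\}$ the configuration of twelve smooth rational curves described in the context (with the labeling for which the basis of $\mathrm{Num}(S)$ given there holds). Then the elliptic fibrations in $\mathcal{E}(S,\mathcal{R})$ are: $3$ of type $(2\widetilde{A}_3^{\mathrm{F}})$, $24$ of type $(\widetilde{A}_3^{\mathrm{HF}})$, $32$ of type $(\widetilde{A}_5^{\mathrm{F}})$, $32$ of type $(\widetilde{A}_5^{\mathrm{HF}})$, $12$ of type $(\widetilde{D}_4^{\mathrm{F}})$, $24$ of type $(\widetilde{D}_5^{\mathrm{F}})$, $48$ of type $(\widetilde{D}_6^{\mathrm{F}})$. Moreover $\mathrm{cnd}(S,\mathcal{R})=10$, hence $\mathrm{nd}(S)=10$; an isotropic sequence of classes of half-fibers realizing this is given by the classes of $\tfrac12(R_1+R_2+R_3+R_4)$, $\tfrac12(R_3+R_4+R_5+R_6)$, $\tfrac12(R_5+R_6+R_7+R_8)$, $\tfrac12(R_1+R_3+R_5+R_8+R_9+R_{12})$, $\tfrac12(R_1+R_4+R_5+R_7+R_9+R_{12})$, $\tfrac12(R_1+R_4+R_5+R_8+R_9+R_{11})$, $\tfrac12(R_1+R_3+R_5+R_7+R_9+R_{11})$, $\tfrac12(2R_1+R_3+R_4+R_{11}+R_{12})$, $\tfrac12(R_3+R_4+2R_5+R_7+R_8)$, $\tfrac12(R_7+R_8+2R_9+R_{11}+R_{12})$.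
   Context: Work over $\mathbb{C}$. A $D_{1,6}$-polarized Enriques surface $S$ is the $\mathbb{Z}_2^2$-cover of the blow-up $\mathrm{Bl}_3\mathbb{P}^2$ of $\mathbb{P}^2$ at three non-collinear points with building data $D_a=\ell_1+\ell_1'$, $D_b=\ell_2+\ell_2'$, $D_c=\ell_3+\ell_3'$, where $\ell_i,\ell_i'$ are two distinct smooth fibers of the $i$-th ruling, the six lines having no triple points. The preimage of the six $(-1)$-curves is twelve smooth rational curves $R_1,\ldots,R_{12}$ with dual graph: $R_{2k-1}\cdot R_{2k}=0$, each of $R_{2k-1},R_{2k}$ meets each of $R_{2k+1},R_{2k+2}$ (indices mod $12$) with intersection $1$, no other intersections; the labeling is such that $\mathrm{Num}(S)$ has $\mathbb{Z}$-basis $R_1,R_2,R_3,R_5,R_7,R_9,\tfrac12(R_1+R_3+R_5+R_7+R_9+R_{11}),\tfrac12(R_1+R_2+R_3+R_4),\tfrac12(R_3+R_4+R_5+R_6),\tfrac12(R_5+R_6+R_7+R_8)$. Definitions: $\mathrm{Num}(S)$ = divisors mod numerical equivalence. Half-fibers: the reduced curves $F$ with $2F$ a multiple fiber of an elliptic fibration. $\mathrm{nd}(S)$ = maximal length of a sequence of classes of half-fibers $f_1,\dots,f_m$ with $f_i\cdot f_j=1$ for $i\ne j$. For a finite set $\mathcal{R}$ of smooth rational curves: an $\mathcal{R}$-elliptic cycle is $C=\sum_{R\in\mathcal{R}}a_RR$, $a_R\ge0$, whose support has dual graph an extended Dynkin diagram $\widetilde{A}_n,\widetilde{D}_n,\widetilde{E}_{6,7,8}$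 with $a_R$ the multiplicities of the corresponding Kodaira fiber. Put $c(C)=\tfrac12[C]$ if $\tfrac12[C]\in\mathrm{Num}(S)$ (then $C$ is a fiber) and $c(C)=[C]$ otherwise (then $C$ is a half-fiber). $\mathsf{HF}(S,\mathcal{R})=\{c(C)\}$; $\mathrm{cnd}(S,\mathcal{R})$ = max $m$ with $f_1,\dots,f_m\in\mathsf{HF}(S,\mathcal{R})$, $f_i\cdot f_j=1-\delta_{ij}$; $\mathcal{E}(S,\mathcal{R})$ = set of elliptic fibrations $|2F|$ with $[F]\in\mathsf{HF}(S,\mathcal{R})$. The type of a fibration in $\mathcal{E}(S,\mathcal{R})$ is the formal sum, over the $\mathcal{R}$-elliptic cycles $C$ whose support is (set-theoretically) a fiber of it, of $X^{\mathrm{F}}$ (if $C$ is a fiber) or $X^{\mathrm{HF}}$ (if $C$ is a half-fiber), $X$ being the extended Dynkin type of $C$. *)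

(* Defs.v *)
From HB Require Import structures.
From mathcomp Require Import all_boot all_order all_algebra.
Set Implicit Arguments. Unset Strict Implicit. Unset Printing Implicit Defensive.
Import Order.TTheory GRing.Theory Num.Theory.
Local Open Scope ring_scope.

(* R_{2k-1}, R_{2k} form "block" k-1 (0-indexed block = i./2); curves of
   consecutive blocks (mod 6) meet with intersection 1; self-intersection -2;
   no other intersections. *)
Definition adjR (i j : 'I_12) : bool :=
  ((j./2 == (i./2).+1 %% 6) || (i./2 == (j./2).+1 %% 6))%N.

Definition Gint (i j : 'I_12) : int :=
  if i == j then (-2)%Z else if adjR i j then 1%Z else 0%Z.

Definition Gm : 'M[rat]_12 := \matrix_(i, j) (Gint i j)%:~R.

(* Q-divisors supported on the R_i, as row vectors of coefficients. *)
Definition dot (x y : 'rV[rat]_12) : rat := (x *m Gm *m y^T) 0 0.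

(* Numerical equivalence: same intersection number with every R_j
   (the R_j span Num(S) (x) Q). *)
Definition numeq (x y : 'rV[rat]_12) : Prop := (x - y) *m Gm = 0.

(* R_k with k 1-indexed, and 1/2 (R_{k1} + ... + R_{km}) (repetitions allowed). *)
Definition Rv (k : nat) : 'rV[rat]_12 := delta_mx 0 (inord k.-1).
Definition halfR (l : seq nat) : 'rV[rat]_12 := 2^-1 *: \sum_(k <- l) Rv k.

Definition basis_list : seq 'rV[rat]_12 :=
  [:: Rv 1; Rv 2; Rv 3; Rv 5; Rv 7; Rv 9;
      halfR [:: 1; 3; 5; 7; 9; 11]; halfR [:: 1; 2; 3; 4];
      halfR [:: 3; 4; 5; 6]; halfR [:: 5; 6; 7; 8]].
Definition basisv (k : 'I_10) : 'rV[rat]_12 := nth 0 basis_list k.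

Definition vec (a : {ffun 'I_10 -> int}) : 'rV[rat]_12 :=
  \sum_(k < 10) (a k)%:~R *: basisv k.

Definition cdot (a b : {ffun 'I_10 -> int}) : rat := dot (vec a) (vec b).

Definition inNum (x : 'rV[rat]_12) : Prop :=
  exists a : {ffun 'I_10 -> int}, numeq x (vec a).

Inductive DynType := At of nat | Dt of nat | E6t | E7t | E8t.

Definition dyn_eqb (X Y : DynType) : bool :=
  match X, Y with
  | At n, At m => n == m
  | Dt n, Dt m => n == m
  | E6t, E6t | E7t, E7t | E8t, E8t => true
  | _, _ => false
  end.
Lemma dyn_eqP : Equality.axiom dyn_eqb.
Proof.
case=> [n|n|||] [m|m|||] /=; try (by constructor);
  by apply: (iffP eqP) => [->|[]].
Qed.
HB.instance Definition _ := hasDecEq.Build DynType dyn_eqP.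

(* A n = \tilde A_n (n >= 1), Dt n = \tilde D_n (n >= 4), E_k = \tilde E_k. *)
Definition dyn_valid (X : DynType) : bool :=
  match X with At n => (1 <= n)%N | Dt n => (4 <= n)%N | _ => true end.

Definition nv (X : DynType) : nat :=
  match X with At n => n.+1 | Dt n => n.+1 | E6t => 7 | E7t => 8 | E8t => 9 end.

(* edges (as a list; a double edge appears twice, e.g. for \tilde A_1) *)
Definition edges (X : DynType) : seq (nat * nat) :=
  match X with
  | At n => [seq (i, (i.+1 %% n.+1)%N) | i <- iota 0 n.+1]
  | Dt n => [:: (0, 2); (1, 2); (n.-1, n - 2); (n, n - 2)]%N
             ++ [seq (i, i.+1) | i <- iota 2 (n - 4)]
  | E6t => [:: (0, 1); (1, 2); (0, 3); (3, 4); (0, 5); (5, 6)]%N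
  | E7t => [:: (0, 1); (1, 2); (2, 3); (0, 4); (4, 5); (5, 6); (0, 7)]%N
  | E8t => [:: (0, 1); (0, 2); (2, 3); (0, 4); (4, 5); (5, 6); (6, 7); (7, 8)]%N
  end.

Definition mult (X : DynType) (i : nat) : nat :=
  match X with
  | At _ => 1
  | Dt n => if (i <= 1)%N || (n.-1 <= i)%N then 1 else 2
  | E6t => nth 0 [:: 3; 2; 1; 2; 1; 2; 1] i
  | E7t => nth 0 [:: 4; 3; 2; 1; 3; 2; 1; 2] i
  | E8t => nth 0 [:: 6; 3; 4; 2; 5; 4; 3; 2; 1] i
  end.

Definition gram (X : DynType) (i j : 'I_(nv X)) : int :=
  if i == j then (-2)%Z
  else (count (fun e => (e == (i : nat, j : nat)) || (e == (j : nat, i : nat)))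
              (edges X))%:Z.

Definition ellCycle (X : DynType) (C : {ffun 'I_12 -> nat}) : Prop :=
  dyn_valid X /\
  exists phi : 'I_(nv X) -> 'I_12,
    [/\ injective phi,
        (forall i j, Gint (phi i) (phi j) = gram i j),
        (forall i, C (phi i) = mult X i) &
        (forall r, (forall i, phi i != r) -> C r = 0%N)].

Definition cl (C : {ffun 'I_12 -> nat}) : 'rV[rat]_12 := \row_i (C i)%:R.

Definition isFiber (C : {ffun 'I_12 -> nat}) : Prop := inNum (2^-1 *: cl C).

Definition cclass (C : {ffun 'I_12 -> nat}) (f : {ffun 'I_10 -> int}) : Prop :=
  (isFiber C /\ numeq (2^-1 *: cl C) (vec f)) \/
  (~ isFiber C /\ numeq (cl C) (vec f)).

(* f in HF(S,R) ; fibrations in E(S,R) correspond to such classes f (|2F|, [F]=f). *)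
Definition inHF (f : {ffun 'I_10 -> int}) : Prop :=
  exists X C, ellCycle X C /\ cclass C f.

Definition card_is (T : eqType) (P : T -> Prop) (n : nat) : Prop :=
  exists s : seq T, [/\ uniq s, size s = n & forall x, x \in s <-> P x].

(* Type of the fibration with half-fiber class f: a formal sum of X^F / X^HF,
   given as a list of (X, is_fiber) with repetitions. *)
Definition hasType (f : {ffun 'I_10 -> int}) (t : seq (DynType * bool)) : Prop :=
  forall (X : DynType) (b : bool),
    card_is (fun C : {ffun 'I_12 -> nat} =>
               [/\ ellCycle X C, cclass C f & (isFiber C <-> b)])
            (count (pred1 (X, b)) t).

Definition isotropicHF (s : seq {ffun 'I_10 -> int}) : Prop :=
  (forall f, f \in s -> inHF f) /\
  (forall i j, (i < size s)%N -> (j < size s)%N ->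
     cdot (nth [ffun => 0] s i) (nth [ffun => 0] s j) = (i != j)%:R).

Definition cnd_is (n : nat) : Prop :=
  (exists s, isotropicHF s /\ size s = n) /\
  (forall s, isotropicHF s -> (size s <= n)%N).

(* Main.v *)
Require Import Defs.
From mathcomp Require Import all_boot all_order all_algebra.
From mathcomp Require Import ring.
Set Implicit Arguments. Unset Strict Implicit. Unset Printing Implicit Defensive.
Import Order.TTheory GRing.Theory Num.Theory.
Local Open Scope ring_scope.

Definition adjN (i j : nat) : bool :=
  ((j./2 == (i./2).+1 %% 6) || (i./2 == (j./2).+1 %% 6))%N.
Definition GintN (i j : nat) : int :=
  if (i == j)%N then (-2)%Z else if adjN i j then 1%Z else 0%Z.
Lemma GintE (i j : 'I_12) : Gint i j = GintN i j.
Proof. by []. Qed.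

Definition gramn (X : DynType) (i j : nat) : int :=
  if (i == j)%N then (-2)%Z
  else (count (fun e => (e == (i, j)) || (e == (j, i))) (edges X))%:Z.
Lemma gramE X (i j : 'I_(nv X)) : gram i j = gramn X i j.
Proof. by []. Qed.

Definition newok X (l : seq nat) (v : nat) : bool :=
  (GintN v v == gramn X (size l) (size l)) &&
  all (fun i => (GintN (nth 0%N l i) v == gramn X i (size l)) &&
                (GintN v (nth 0%N l i) == gramn X (size l) i)) (iota 0 (size l)).
Definition ext X (ls : seq (seq nat)) : seq (seq nat) :=
  flatten [seq [seq rcons l v | v <- iota 0 12 & newok X l v] | l <- ls].
Definition srch X n := iter n (ext X) [:: [::]].

Definition Xs : seq DynType :=
  [seq At n | n <- iota 1 11] ++ [seq Dt n | n <- iota 4 8] ++ [:: E6t; E7t; E8t].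
Definition buildL X (l : seq nat) : seq nat :=
  [seq (if r \in l then mult X (index r l) else 0%N) | r <- iota 0 12].
Definition cycX X := undup [seq buildL X l | l <- srch X (nv X)].
Definition cycL0 : seq (DynType * seq nat) :=
  flatten [seq [seq (X, c) | c <- cycX X] | X <- Xs].
Definition cycL : seq (DynType * seq nat) := locked cycL0.
Lemma cycLE : cycL = cycL0. Proof. by rewrite /cycL -lock. Qed.
Arguments cycL0 : simpl never.
Arguments Xs : simpl never.
Arguments srch : simpl never.


Definition okl X (l : seq nat) : Prop := (forall v, v \in l -> (v < 12)%N) /\
  forall i j, (i < size l)%N -> (j < size l)%N ->
     GintN (nth 0%N l i) (nth 0%N l j) = gramn X i j.

Lemma okl_rcons X l v :
  okl X (rcons l v) <-> [/\ okl X l, (v < 12)%N & newok X l v].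
Proof.
split.
- move=> [H1 H2]; rewrite size_rcons in H2; split.
  + split; first by move=> x xl; apply: H1; rewrite mem_rcons inE xl orbT.
    move=> i j il jl; have := H2 i j (ltnW il) (ltnW jl).
    by rewrite !nth_rcons il jl.
  + by apply: H1; rewrite mem_rcons inE eqxx.
  + apply/andP; split.
      by have := H2 (size l) (size l) (ltnSn _) (ltnSn _); rewrite !nth_rcons ltnn eqxx => ->.
    apply/allP => i; rewrite mem_iota add0n => /andP [_ il]; apply/andP; split.
      by have := H2 i (size l) (ltnW il) (ltnSn _); rewrite !nth_rcons il ltnn eqxx => ->.
    by have := H2 (size l) i (ltnSn _) (ltnW il); rewrite !nth_rcons il ltnn eqxx => ->.
- move=> [[H1 H2] vl /andP [/eqP Hv /allP Ha]]; split.
    by move=> x; rewrite mem_rcons inE => /orP [/eqP ->|]; [|apply: H1].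
  rewrite size_rcons => i j; rewrite !ltnS => Hi Hj.
  have Ei : (i < size l)%N \/ i = size l.
    by case: (ltnP i (size l)) => il; [left|right; apply/eqP; rewrite eqn_leq Hi il].
  have Ej : (j < size l)%N \/ j = size l.
    by case: (ltnP j (size l)) => jl; [left|right; apply/eqP; rewrite eqn_leq Hj jl].
  case: Ei => [il|ei]; case: Ej => [jl|ej].
  + by rewrite !nth_rcons il jl; apply: H2.
  + have := Ha i; rewrite mem_iota add0n il => /(_ isT) /andP [/eqP + _].
    by rewrite !nth_rcons il ej ltnn eqxx.
  + have := Ha j; rewrite mem_iota add0n jl => /(_ isT) /andP [_ /eqP].
    by rewrite !nth_rcons jl ei ltnn eqxx.
  + by rewrite !nth_rcons ei ej ltnn eqxx.
Qed.

Lemma srchP X n l : l \in srch X n <-> size l = n /\ okl X l.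
Proof.
elim: n l => [|n IH] l /=.
  rewrite inE; split; first by move/eqP => ->; split=> //; split=> //.
  by case=> /size0nil ->.
split.
- move/flattenP => [s /mapP [l' l'in ->]] /mapP [v]; rewrite mem_filter mem_iota add0n.
  move=> /andP [nv vl] ->; have [sl ol] := (IH l').1 l'in.
  by rewrite size_rcons sl; split=> //; apply/okl_rcons.
- case: (lastP l) => [|l' v]; first by case.
  rewrite size_rcons => -[[sl] /okl_rcons [ol vl nv]].
  apply/flattenP; exists [seq rcons l' v0 | v0 <- iota 0 12 & newok X l' v0].
    by apply/mapP; exists l' => //; apply/IH.
  by apply/mapP; exists v => //; rewrite mem_filter mem_iota add0n nv vl.
Qed.

Definition toC (c : seq nat) : {ffun 'I_12 -> nat} := [ffun r : 'I_12 => nth 0%N c r].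

Lemma Xs_valid X : X \in Xs -> dyn_valid X.
Proof. move=> H; have : all dyn_valid Xs by []. by move/allP; apply. Qed.

Lemma mem_Xs X : dyn_valid X -> (nv X <= 12)%N -> X \in Xs.
Proof.
case: X => [n|n|||] //= v b; rewrite /Xs !mem_cat.
- by apply/orP; left; apply/mapP; exists n => //; rewrite mem_iota v.
- by apply/orP; right; apply/orP; left; apply/mapP; exists n => //; rewrite mem_iota v /=; rewrite addnC.
Qed.

Lemma cycL_mem X c : (X, c) \in cycL <->
  X \in Xs /\ exists2 l, l \in srch X (nv X) & c = buildL X l.
Proof.
rewrite cycLE; split.
- move/flattenP => [s /mapP [Y YXs ->]] /mapP [c' c'in]; case=> -> ->.
  split=> //; move: c'in; rewrite mem_undup => /mapP [l lin ->]; by exists l.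
- move=> [XXs [l lin ->]]; apply/flattenP; exists [seq (X, c) | c <- cycX X].
    by apply/mapP; exists X.
  apply/mapP; exists (buildL X l) => //; rewrite mem_undup; apply/mapP; by exists l.
Qed.

Lemma nth_l n (f : 'I_n -> nat) i (il : (i < n)%N) :
  nth 0%N [seq f j | j <- enum 'I_n] i = f (Ordinal il).
Proof.
rewrite (nth_map (Ordinal il)) ?size_enum_ord //; congr f; apply: val_inj.
by rewrite /= nth_enum_ord.
Qed.

Lemma ellCycleP X C : ellCycle X C <-> exists2 c, (X, c) \in cycL & C = toC c.
Proof.
split.
- move=> [vX [phi [inj Hg Hm H0]]].
  have nvle : (nv X <= 12)%N by have := @leq_card _ _ phi inj; rewrite !card_ord.
  pose l := [seq nat_of_ord (phi j) | j <- enum 'I_(nv X)].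
  have sl : size l = nv X by rewrite size_map size_enum_ord.
  have ol : okl X l.
    split; first by move=> v /mapP [i _ ->].
    rewrite sl => i j il jl; rewrite (nth_l (fun j => nat_of_ord (phi j)) il).
    by rewrite (nth_l (fun j => nat_of_ord (phi j)) jl) -GintE Hg gramE.
  exists (buildL X l).
    by apply/cycL_mem; split; [exact: mem_Xs | exists l => //; apply/srchP].
  apply/ffunP => r; rewrite !ffunE /buildL (nth_map 0%N) ?size_iota ?ltn_ord //.
  rewrite nth_iota ?ltn_ord // add0n.
  case: (boolP (nat_of_ord r \in l)) => rl.
  + move: (rl) => /mapP [i _ ri].
    have -> : r = phi i by apply: val_inj.
    rewrite Hm; congr mult.
    rewrite /l (index_map (f := fun j => nat_of_ord (phi j))).
      by rewrite index_enum_ord.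
    by move=> a b /val_inj /inj.
  + apply: H0 => i; apply/eqP => e; move/negP: rl; apply.
    by rewrite -e; apply/mapP; exists i => //; rewrite mem_enum.
- move=> [c /cycL_mem [XXs [l lin ->]] ->]; have [sl [lb ol]] := (srchP _ _ _).1 lin.
  split; first exact: Xs_valid.
  have nb i : (i < nv X)%N -> (nth 0%N l i < 12)%N.
    by move=> il; apply lb; apply mem_nth; rewrite sl.
  pose phi (i : 'I_(nv X)) : 'I_12 := Ordinal (nb i (ltn_ord i)).
  have ul : uniq l.
    apply/(uniqP 0%N) => i j; rewrite !inE => il jl e; apply/eqP; apply/negPn/negP => ne.
    by have := ol i j il jl; rewrite e /GintN eqxx /gramn (negPf ne).
  exists phi; split.
  + move=> i j e; apply/val_inj.
    have Hi : (nat_of_ord i \in gtn (size l)) by rewrite inE sl.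
    have Hj : (nat_of_ord j \in gtn (size l)) by rewrite inE sl.
    exact: (uniqP 0%N ul _ _ Hi Hj (congr1 val e)).
  + by move=> i j; rewrite GintE gramE /= ol ?sl.
  + move=> i; rewrite ffunE /buildL (nth_map 0%N) ?size_iota ?nb //.
    by rewrite nth_iota ?nb //= mem_nth ?sl // index_uniq ?sl.
  + move=> r Hr; rewrite ffunE /buildL (nth_map 0%N) ?size_iota ?ltn_ord //.
    rewrite nth_iota ?ltn_ord // add0n.
    have : nat_of_ord r \notin l.
      apply/negP => rl; have il : (index (nat_of_ord r) l < nv X)%N by rewrite -sl index_mem.
      move/eqP: (Hr (Ordinal il)); apply; apply/val_inj => /=.
      by rewrite nth_index.
    by move/negPf ->.
Qed.

Definition sumZ (s : seq int) : int := foldr +%R 0 s.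
Lemma big_sumZ (I : Type) (s : seq I) (F : I -> int) :
  \sum_(i <- s) F i = sumZ (map F s).
Proof. by elim: s => [|x s IH]; rewrite ?big_nil ?big_cons ?IH. Qed.
Lemma sum_ordZ n (F : nat -> int) : \sum_(i < n) F i = sumZ [seq F i | i <- iota 0 n].
Proof. by rewrite -(big_mkord xpredT F) /index_iota subn0 big_sumZ. Qed.
Lemma sum_ordZ' n (F : 'I_n -> int) (F' : nat -> int) :
  (forall i : 'I_n, F i = F' i) -> \sum_i F i = sumZ [seq F' i | i <- iota 0 n].
Proof. by move=> H; rewrite (eq_bigr (fun i : 'I_n => F' i)) ?sum_ordZ. Qed.

Lemma numeqP x y : numeq x y <-> forall j, (x *m Gm) 0 j = (y *m Gm) 0 j.
Proof.
rewrite /numeq mulmxBl; split.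
- by move/eqP; rewrite subr_eq0 => /eqP ->.
- by move=> H; apply/eqP; rewrite subr_eq0; apply/eqP/rowP.
Qed.

Lemma ipE (x : 'rV[rat]_12) j : (x *m Gm) 0 j = \sum_i x 0 i * (GintN i j)%:~R.
Proof. by rewrite !mxE; apply: eq_bigr => i _; rewrite mxE. Qed.

Definition idx (k : nat) : nat := if (k.-1 < 12)%N then k.-1 else 0%N.
Lemma inord_idx k : nat_of_ord (inord k.-1 : 'I_12) = idx k.
Proof. by rewrite /inord val_insubd. Qed.

Lemma Rv_ip k j : (Rv k *m Gm) 0 j = (GintN (idx k) j)%:~R.
Proof. by rewrite /Rv -(rowE (inord k.-1) Gm) mxE mxE GintE inord_idx. Qed.

Lemma halfR_ip l j :
  (halfR l *m Gm) 0 j = 2^-1 * (sumZ [seq GintN (idx k) j | k <- l])%:~R.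
Proof.
rewrite /halfR -scalemxAl mxE mulmx_suml summxE -big_sumZ rmorph_sum; congr (_ * _).
by apply: eq_bigr => k _; rewrite Rv_ip.
Qed.

Definition bdesc : seq (seq nat) :=
  [:: [:: 1; 1]; [:: 2; 2]; [:: 3; 3]; [:: 5; 5]; [:: 7; 7]; [:: 9; 9];
      [:: 1; 3; 5; 7; 9; 11]; [:: 1; 2; 3; 4]; [:: 3; 4; 5; 6]; [:: 5; 6; 7; 8]]%N.

Lemma Rv_half k : Rv k = halfR [:: k; k].
Proof.
by rewrite /halfR !big_cons big_nil addr0 -mulr2n -scaler_nat scalerA mulVf ?scale1r.
Qed.

Lemma basisvE (k : 'I_10) : basisv k = halfR (nth [::] bdesc k).
Proof.
have E : basis_list = map halfR bdesc by rewrite /basis_list !Rv_half.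
by rewrite /basisv E (nth_map [::]) // (ltn_ord k).
Qed.

Definition B2N (k j : nat) : int := sumZ [seq GintN (idx kk) j | kk <- nth [::] bdesc k].

Lemma vec_ip a j : (vec a *m Gm) 0 j = 2^-1 * (\sum_(k < 10) a k * B2N k j)%:~R.
Proof.
rewrite /vec mulmx_suml summxE rmorph_sum mulr_sumr; apply: eq_bigr => k _.
by rewrite -scalemxAl mxE basisvE halfR_ip rmorphM mulrCA.
Qed.

Lemma cl_ip C j : (cl C *m Gm) 0 j = (\sum_(i < 12) (C i)%:Z * GintN i j)%:~R.
Proof. by rewrite ipE rmorph_sum; apply: eq_bigr => i _; rewrite mxE rmorphM. Qed.

Definition Qtab : seq (seq int) :=
 [:: [:: -1; -1; 1; 1; 1; 2; -2; 0; -1; 3]; [:: 0; -2; 1; 1; 1; 2; -2; 0; -1; 3];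
     [:: -1; -1; -1; 0; 0; 1; 0; 1; -1; 2]; [:: 0; 0; 1; 0; 0; 1; 0; -1; -1; 2];
     [:: 0; 1; -1; -2; -1; -1; 2; 0; 1; -1]; [:: -1; 0; -1; 0; -1; -1; 2; 2; -1; -1];
     [:: 0; 1; -1; -1; -2; -2; 2; 1; 1; -2]; [:: 1; 2; -1; -1; 0; -2; 2; -1; 3; -4];
     [:: 1; 1; 0; 0; 0; -2; 0; 0; 2; -2]; [:: 0; 0; 0; 0; 0; 0; 0; 0; 0; 0];
     [:: 1; -1; 2; 2; 2; 2; -4; 0; 0; 2]; [:: 0; 0; 0; 0; 0; 0; 0; 0; 0; 0]]%Z.
Definition QN (j k : nat) : int := nth 0 (nth [::] Qtab j) k.

Lemma BQ_tab : all (fun k => all (fun k' =>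
    sumZ [seq B2N k j * QN j k' | j <- iota 0 12] == (if (k == k')%N then 4 else 0))
    (iota 0 10)) (iota 0 10).
Proof. by vm_compute. Qed.

Lemma BQ (k k' : 'I_10) : \sum_(j < 12) B2N k j * QN j k' = if k == k' then 4 else 0.
Proof.
rewrite (sum_ordZ' (F' := fun j => B2N k j * QN j k')) //; have := allP BQ_tab k; rewrite mem_iota ltn_ord => /(_ isT) /allP.
by move=> /(_ k'); rewrite mem_iota ltn_ord => /(_ isT) /eqP.
Qed.

Lemma key (a : {ffun 'I_10 -> int}) (k' : 'I_10) :
  \sum_(j < 12) (\sum_(k < 10) a k * B2N k j) * QN j k' = 4 * a k'.
Proof.
under eq_bigr do rewrite mulr_suml.
rewrite exchange_big /=.
under eq_bigr do (under eq_bigr do rewrite -mulrA; rewrite -mulr_sumr BQ).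
rewrite (bigD1 k') // eqxx big1 /=; first by rewrite addr0 mulrC.
by move=> k /negPf ->; rewrite mulr0.
Qed.

Definition wq (w : nat -> int) (k : nat) : int := sumZ [seq w j * QN j k | j <- iota 0 12].
Definition memb (w : nat -> int) : bool :=
  let q := [seq wq w k | k <- iota 0 10] in
  all (fun x => (4 %| x)%Z) q &&
  all (fun j => sumZ [seq (nth 0 q k %/ 4)%Z * B2N k j | k <- iota 0 10] == w j) (iota 0 12).
Definition coordF (w : nat -> int) : {ffun 'I_10 -> int} := [ffun k : 'I_10 => (wq w k %/ 4)%Z].

Lemma wq_eq (w : nat -> int) (a : {ffun 'I_10 -> int}) :
  (forall j : 'I_12, \sum_(k < 10) a k * B2N k j = w j) ->
  forall k : 'I_10, wq w k = 4 * a k.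
Proof.
move=> H k; rewrite -key /wq -(sum_ordZ _ (fun j => w j * QN j k)).
by apply: eq_bigr => j _; rewrite H.
Qed.

Lemma span_uniq (w : nat -> int) (a : {ffun 'I_10 -> int}) :
  (forall j : 'I_12, \sum_(k < 10) a k * B2N k j = w j) -> a = coordF w.
Proof.
move=> H; apply/ffunP => k; rewrite ffunE (wq_eq H) mulKz //.
Qed.

Lemma memb_coord (w : nat -> int) : memb w -> forall j : 'I_12, \sum_(k < 10) coordF w k * B2N k j = w j.
Proof.
rewrite /memb; case/andP => _ /allP H j; have := H j; rewrite mem_iota ltn_ord => /(_ isT) /eqP <-.
by apply: sum_ordZ' => k; rewrite ffunE (nth_map 0%N) ?size_iota // nth_iota.
Qed.

Lemma membP (w : nat -> int) :
  (exists a : {ffun 'I_10 -> int}, forall j : 'I_12, \sum_(k < 10) a k * B2N k j = w j)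
  <-> memb w.
Proof.
split; last by move=> m; exists (coordF w); exact: memb_coord.
move=> [a H]; have E := span_uniq H; subst a; rewrite /memb; apply/andP; split.
- apply/allP => x /mapP [k]; rewrite mem_iota add0n => /andP [_ kl] ->.
  by rewrite (wq_eq H (Ordinal kl)) dvdz_mulr.
- apply/allP => j; rewrite mem_iota add0n => /andP [_ jl].
  rewrite -(H (Ordinal jl)); apply/eqP; symmetry; apply: sum_ordZ' => k.
  by rewrite ffunE (nth_map 0%N) ?size_iota // nth_iota.
Qed.

Definition cwN (c : seq nat) (j : nat) : int :=
  sumZ [seq (nth 0%N c i)%:Z * GintN i j | i <- iota 0 12].
Definition cwL (c : seq nat) : seq int := [seq cwN c j | j <- iota 0 12].
Definition cwv (c : seq nat) (j : nat) : int := nth 0 (cwL c) j.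
Definition w2 (c : seq nat) (j : nat) : int := nth 0 [seq 2 * x | x <- cwL c] j.
Definition fibb (c : seq nat) : bool := memb (cwv c).
Definition clsF (c : seq nat) : {ffun 'I_10 -> int} :=
  if fibb c then coordF (cwv c) else coordF (w2 c).
Lemma cwvE c (j : 'I_12) : cwv c j = cwN c j.
Proof. by rewrite /cwv /cwL (nth_map 0%N) ?size_iota // nth_iota. Qed.
Lemma w2E c (j : 'I_12) : w2 c j = 2 * cwN c j.
Proof. by rewrite /w2 (nth_map 0) ?size_map ?size_iota // -cwvE. Qed.

Lemma cl_ipN c j : (cl (toC c) *m Gm) 0 j = (cwN c j)%:~R.
Proof. by rewrite cl_ip; congr intr; apply: sum_ordZ' => i; rewrite ffunE. Qed.

Lemma half2 (x : int) : (2^-1 : rat) * (2 * x)%:~R = x%:~R.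
Proof. by rewrite rmorphM /=; field. Qed.

Lemma half_inj (x y : int) : (2^-1 : rat) * x%:~R = 2^-1 * y%:~R -> x = y.
Proof. by move/(mulfI _)/intr_inj; apply; rewrite invr_eq0 pnatr_eq0. Qed.

Lemma numeq_half c (a : {ffun 'I_10 -> int}) :
  numeq (2^-1 *: cl (toC c)) (vec a) <->
  forall j : 'I_12, \sum_(k < 10) a k * B2N k j = cwv c j.
Proof.
rewrite numeqP; split => H j.
- by have := H j; rewrite -scalemxAl mxE cl_ipN vec_ip cwvE => /half_inj ->.
- by rewrite -scalemxAl mxE cl_ipN vec_ip (H j) cwvE.
Qed.

Lemma numeq_full c (a : {ffun 'I_10 -> int}) :
  numeq (cl (toC c)) (vec a) <->
  forall j : 'I_12, \sum_(k < 10) a k * B2N k j = w2 c j.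
Proof.
rewrite numeqP; split => H j.
- by have := H j; rewrite cl_ipN vec_ip -(half2 (cwN c j)) w2E => /half_inj <-.
- by rewrite cl_ipN vec_ip -(half2 (cwN c j)) (H j) w2E.
Qed.

Lemma isFiberE c : isFiber (toC c) <-> fibb c.
Proof.
rewrite /isFiber /inNum /fibb -membP; split => -[a H]; exists a; exact/numeq_half.
Qed.

Lemma cclassE c f : memb (w2 c) -> (cclass (toC c) f <-> f = clsF c).
Proof.
move=> m2; rewrite /cclass /clsF; case: (boolP (fibb c)) => fb; split.
- case=> [[_ /numeq_half H]|[nf _]]; first exact: span_uniq H.
  by exfalso; apply: nf; apply/isFiberE.
- move=> ->; left; split; first exact/isFiberE.
  by apply/numeq_half; apply: memb_coord.
- case=> [[/isFiberE ft _]|[_ /numeq_full H]]; first by rewrite ft in fb.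
  exact: span_uniq H.
- move=> ->; right; split; first by move/isFiberE; apply/negP.
  by apply/numeq_full; apply: memb_coord.
Qed.

Definition toF (s : seq int) : {ffun 'I_10 -> int} := [ffun k : 'I_10 => nth 0 s k].
Definition clsL c : seq int :=
  let q := if fibb c then [seq wq (cwv c) k | k <- iota 0 10]
           else [seq wq (w2 c) k | k <- iota 0 10] in
  [seq (x %/ 4)%Z | x <- q].

Lemma clsFE c : clsF c = toF (clsL c).
Proof.
apply/ffunP => k; rewrite /clsF /clsL; cbv zeta; case: (fibb c);
  by rewrite !ffunE (nth_map 0) ?size_map ?size_iota ?ltn_ord // (nth_map 0%N) ?size_iota ?ltn_ord // nth_iota ?ltn_ord.
Qed.

Lemma size_clsL c : size (clsL c) = 10%N.
Proof. by rewrite /clsL; cbv zeta; case: (fibb c); rewrite !size_map size_iota. Qed.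

Lemma toF_inj s1 s2 : size s1 = 10%N -> size s2 = 10%N -> toF s1 = toF s2 -> s1 = s2.
Proof.
move=> h1 h2 e; apply: (@eq_from_nth _ 0); first by rewrite h1 h2.
by move=> i; rewrite h1 => il; have := congr1 (fun f : {ffun 'I_10 -> int} => f (Ordinal il)) e; rewrite !ffunE.
Qed.

Lemma toC_inj s1 s2 : size s1 = 12%N -> size s2 = 12%N -> toC s1 = toC s2 -> s1 = s2.
Proof.
move=> h1 h2 e; apply: (@eq_from_nth _ 0%N); first by rewrite h1 h2.
by move=> i; rewrite h1 => il; have := congr1 (fun f : {ffun 'I_12 -> nat} => f (Ordinal il)) e; rewrite !ffunE.
Qed.

Lemma cycL_sz p : p \in cycL -> size p.2 = 12%N.
Proof. by case: p => X c /cycL_mem [_ [l _ ->]]; rewrite size_map size_iota. Qed.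

Lemma cycL_m2 : all (fun p => memb (w2 p.2)) cycL.
Proof. rewrite cycLE; by vm_compute. Qed.

Lemma uniq_cycL : uniq cycL.
Proof. rewrite cycLE; by vm_compute. Qed.

Lemma m2_of p : p \in cycL -> memb (w2 p.2).
Proof. by move=> pin; apply: (allP cycL_m2). Qed.

Lemma card_is_uniq (T : eqType) (P : T -> Prop) n m :
  card_is P n -> card_is P m -> n = m.
Proof.
move=> [s1 [u1 <- H1]] [s2 [u2 <- H2]]; apply: perm_size; apply: uniq_perm => // x.
by apply/idP/idP => h; [apply/H2; apply/H1 | apply/H1; apply/H2].
Qed.


Arguments GintN : simpl never.
Arguments gramn : simpl never.
Arguments newok : simpl never.
Arguments buildL : simpl never.
Arguments sumZ : simpl never.
Arguments B2N : simpl never.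
Arguments QN : simpl never.
Arguments wq : simpl never.
Arguments memb : simpl never.
Arguments coordF : simpl never.
Arguments cwN : simpl never.
Arguments cwL : simpl never.
Arguments cwv : simpl never.
Arguments w2 : simpl never.
Arguments fibb : simpl never.
Arguments clsF : simpl never.
Arguments toF : simpl never.
Arguments clsL : simpl never.
Arguments toC : simpl never.
Arguments idx : simpl never.


Definition typeL (s : seq int) : seq (DynType * bool) :=
  [seq (p.1, fibb p.2) | p <- cycL & clsL p.2 == s].
Arguments typeL : simpl never.
Definition hasTypeb s t := perm_eq (typeL s) t.

Lemma count_type X (b : bool) s : size s = 10%N ->
  card_is (fun C : {ffun 'I_12 -> nat} =>
             [/\ ellCycle X C, cclass C (toF s) & (isFiber C <-> b)])
          (count (pred1 (X, b)) (typeL s)).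
Proof.
move=> ss.
exists [seq toC p.2 | p <- cycL & (clsL p.2 == s) && ((p.1 == X) && (fibb p.2 == b))]; split.
- rewrite map_inj_in_uniq; first exact: (filter_uniq _ uniq_cycL).
  move=> [Y c] [Z d]; rewrite (mem_filter _ _ cycL) => /andP [/andP [_ /andP [/eqP eY _]] pin].
  rewrite (mem_filter _ _ cycL) => /andP [/andP [_ /andP [/eqP eZ _]] qin] e.
  rewrite /= in eY eZ e; rewrite eY eZ; congr pair.
  apply: toC_inj; [move: (cycL_sz pin); apply | move: (cycL_sz qin); apply | exact e].
- rewrite size_map size_filter /typeL count_map count_filter.
  by apply: eq_count => p; rewrite /= xpair_eqE andbC.
- move=> C; split.
  + move/mapP => [[Y c]]; rewrite (mem_filter _ _ cycL).
    move=> /andP [/andP [/eqP cs /andP [/eqP eY /eqP fb]] pin] ->.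
    rewrite /= in cs eY fb *; subst Y; split.
    * by apply/ellCycleP; exists c.
    * by apply/(cclassE _ (m2_of pin)); rewrite clsFE cs.
    * by rewrite isFiberE fb; case: b {fb pin}.
  + move=> [/ellCycleP [c pin ->] cc fb]; apply/mapP; exists (X, c); last by [].
    rewrite (mem_filter _ _ cycL) pin andbT.
    have e : toF s = clsF c by apply/(cclassE _ (m2_of pin)).
    rewrite clsFE in e; have -> : clsL c = s by apply: toF_inj => //; rewrite size_clsL.
    rewrite /= !eqxx /=; apply/eqP.
    case: b fb => fb; first by apply: (isFiberE c).1; apply: fb.2.
    by apply/negbTE/negP => H; have := fb.1 ((isFiberE c).2 H).
Qed.

Lemma hasTypeP s t : size s = 10%N -> (hasType (toF s) t <-> hasTypeb s t).
Proof.
move=> ss; split.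
- move=> H; rewrite /hasTypeb /perm_eq; apply/allP => -[X b] _; apply/eqP.
  have h1 := count_type X b ss; have h2 := H X b.
  move: (card_is_uniq h1 h2); apply.
- move=> /permP H X b; have := count_type X b ss; rewrite H; apply.
Qed.


Definition classes : seq (seq int) := undup [seq clsL p.2 | p <- cycL].
Arguments classes : simpl never.

Lemma classes_sz s : s \in classes -> size s = 10%N.
Proof. by rewrite mem_undup => /mapP [p _ ->]; rewrite size_clsL. Qed.

Lemma inHFP f : inHF f <-> exists2 s, s \in classes & f = toF s.
Proof.
split.
- move=> [X [C [/ellCycleP [c pin ->] cc]]]; exists (clsL c).
    by rewrite mem_undup; apply/mapP; exists (X, c).
  have := (cclassE f (m2_of pin)).1 cc; rewrite clsFE; apply.
- move=> [s]; rewrite mem_undup => /mapP [[X c] pin ->] ->.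
  exists X, (toC c); split; first by apply/ellCycleP; exists c.
  by apply/(cclassE _ (m2_of pin)); rewrite clsFE.
Qed.

Lemma card_t t n : size [seq s <- classes | hasTypeb s t] = n ->
  card_is (fun f => inHF f /\ hasType f t) n.
Proof.
move=> <-; exists [seq toF s | s <- classes & hasTypeb s t]; split.
- rewrite map_inj_in_uniq; first exact: (filter_uniq _ (undup_uniq _)).
  move=> x y; rewrite !mem_filter => /andP [_ xin] /andP [_ yin].
  by apply: toF_inj; [move: (classes_sz xin); apply | move: (classes_sz yin); apply].
- by rewrite size_map.
- move=> f; split.
  + move/mapP => [s]; rewrite mem_filter => /andP [ht sin] ->; split.
      by apply/inHFP; exists s.
    exact: ((hasTypeP t (classes_sz sin)).2 ht).
  + move=> [/inHFP [s sin ->] ht]; apply/mapP; exists s; last by [].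
    by rewrite mem_filter sin andbT; apply/(hasTypeP t (classes_sz sin)).
Qed.

Definition fibbF c := let l := cwL c in memb (fun j => nth 0 l j).
Definition clsLF c : seq int :=
  let l := cwL c in let l2 := [seq 2 * x | x <- l] in
  let q := if memb (fun j => nth 0 l j) then [seq wq (fun j => nth 0 l j) k | k <- iota 0 10]
           else [seq wq (fun j => nth 0 l2 j) k | k <- iota 0 10] in
  [seq (x %/ 4)%Z | x <- q].
Lemma fibbFE c : fibbF c = fibb c. Proof. reflexivity. Qed.
Lemma clsLFE c : clsLF c = clsL c. Proof. reflexivity. Qed.
Arguments fibbF : simpl never.
Arguments clsLF : simpl never.
Definition tabL := [seq (p.1, clsLF p.2, fibbF p.2) | p <- cycL0].
Definition classes0 := undup [seq q.1.2 | q <- tabL].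
Definition typeL0 s := [seq (q.1.1, q.2) | q <- tabL & q.1.2 == s].
Arguments tabL : simpl never.

Lemma classesE : classes = classes0.
Proof.
rewrite /classes /classes0 /tabL cycLE -map_comp.
have E : [seq clsL p.2 | p <- cycL0] = [seq ((fun q => q.1.2) \o (fun p => (p.1, clsLF p.2, fibbF p.2))) p | p <- cycL0].
  by apply: eq_map => p; exact: (esym (clsLFE p.2)).
rewrite E; reflexivity.
Qed.

Lemma typeLE s : typeL s = typeL0 s.
Proof.
rewrite /typeL /typeL0 /tabL cycLE filter_map -map_comp.
have E1 : [seq p <- cycL0 | preim (fun p => (p.1, clsLF p.2, fibbF p.2)) (fun q => q.1.2 == s) p]
        = [seq p <- cycL0 | clsL p.2 == s].
  by apply: eq_filter => p; exact: (congr1 (fun x => x == s) (clsLFE p.2)).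
rewrite E1; apply: eq_map => p; exact: (esym (congr1 (fun b => (p.1, b)) (fibbFE p.2))).
Qed.

Lemma filterE t : [seq s <- classes | hasTypeb s t] = [seq s <- classes0 | perm_eq (typeL0 s) t].
Proof. by rewrite classesE; apply: eq_filter => s; rewrite /hasTypeb typeLE. Qed.



Definition D2N (k j : nat) : int := sumZ [seq ((idx kk == j)%N)%:Z | kk <- nth [::] bdesc k].

Lemma halfR_entry l (j : 'I_12) :
  halfR l 0 j = 2^-1 * (sumZ [seq ((idx kk == j)%N)%:Z | kk <- l])%:~R.
Proof.
rewrite /halfR mxE summxE -big_sumZ rmorph_sum; congr (_ * _); apply: eq_bigr => kk _.
rewrite /Rv mxE eqxx /=.
by have -> : (j == inord kk.-1 :> 'I_12) = (idx kk == j)%N by rewrite eq_sym -inord_idx.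
Qed.

Lemma vec_entry (a : {ffun 'I_10 -> int}) (j : 'I_12) :
  vec a 0 j = 2^-1 * (\sum_(k < 10) a k * D2N k j)%:~R.
Proof.
rewrite /vec summxE rmorph_sum mulr_sumr; apply: eq_bigr => k _.
by rewrite mxE basisvE halfR_entry rmorphM mulrCA.
Qed.

Definition cdotZ (a b : {ffun 'I_10 -> int}) : int :=
  \sum_(j < 12) (\sum_(k < 10) a k * B2N k j) * (\sum_(k < 10) b k * D2N k j).

Lemma cdotE a b : cdot a b = 2^-1 * (2^-1 * (cdotZ a b)%:~R).
Proof.
rewrite /cdot /dot mxE /cdotZ rmorph_sum !mulr_sumr; apply: eq_bigr => j _.
rewrite vec_ip mxE vec_entry rmorphM; ring.
Qed.

Definition cdotL (s1 s2 : seq int) : int :=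
  sumZ [seq sumZ [seq nth 0 s1 k * B2N k j | k <- iota 0 10] *
            sumZ [seq nth 0 s2 k * D2N k j | k <- iota 0 10] | j <- iota 0 12].

Lemma cdotLE s1 s2 : cdotZ (toF s1) (toF s2) = cdotL s1 s2.
Proof.
apply: sum_ordZ' => j; congr (_ * _); apply: sum_ordZ' => k; by rewrite ffunE.
Qed.

Lemma iso_le10 s : isotropicHF s -> (size s <= 10)%N.
Proof.
move=> [_ H]; rewrite leqNgt; apply/negP => Hs.
pose f (i : 'I_11) := nth [ffun => 0] s i.
have Hf (i j : 'I_11) : dot (vec (f i)) (vec (f j)) = (i != j)%:R.
  by apply: H; apply: leq_trans (ltn_ord _) Hs.
pose Fm : 'M[rat]_(11, 10) := \matrix_(i, k) ((f i k)%:~R).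
have nf : ~~ row_free Fm.
  by rewrite /row_free; apply/negP => /eqP e; have := rank_leq_col Fm; rewrite e.
have nz : kermx Fm != 0 by rewrite kermx_eq0.
set c := nz_row (kermx Fm).
have cnz : c != 0 by rewrite nz_row_eq0.
have cF : c *m Fm = 0 by apply/sub_kermxP; exact: nz_row_sub.
have sum0 : \sum_(i < 11) c 0 i *: vec (f i) = 0.
  rewrite /vec; under eq_bigr do rewrite scaler_sumr.
  rewrite exchange_big /=; apply: big1 => k _.
  under eq_bigr do rewrite scalerA.
  rewrite -scaler_suml.
  have E : (c *m Fm) 0 k = 0 by rewrite cF; apply: mxE.
  rewrite mxE in E.
  have E2 : \sum_(i < 11) c 0 i * (f i k)%:~R = 0.
    transitivity (\sum_j c 0 j * Fm j k); last exact: E.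
    by apply: eq_bigr => i _; rewrite mxE.
  by rewrite E2 scale0r.
have lin y : dot (\sum_(i < 11) c 0 i *: vec (f i)) y = \sum_(i < 11) c 0 i * dot (vec (f i)) y.
  rewrite /dot !mulmx_suml summxE; apply: eq_bigr => i _.
  by rewrite -!scalemxAl mxE.
pose S := \sum_(i < 11) c 0 i.
have cj (j : 'I_11) : c 0 j = S.
  have := lin (vec (f j)); rewrite sum0 => E.
  have d0 : dot 0 (vec (f j)) = 0 by rewrite /dot !mul0mx; apply: mxE.
  rewrite d0 in E.
  have E2 : \sum_(i < 11) c 0 i * (i != j)%:R = 0.
    transitivity (\sum_(i < 11) c 0 i * dot (vec (f i)) (vec (f j))); last by rewrite -E.
    by apply: eq_bigr => i _; rewrite Hf.
  rewrite (bigD1 j) //= eqxx mulr0 add0r in E2.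
  rewrite /S (bigD1 j) //=.
  have -> : \sum_(i < 11 | i != j) c 0 i = \sum_(i < 11 | i != j) c 0 i * (i != j)%:R.
    by apply: eq_bigr => i ->; rewrite mulr1.
  by rewrite E2 addr0.
have S0 : S = 0.
  have E : S = S *+ 11.
    by rewrite {1}/S (eq_bigr (fun _ => S)) ?sumr_const ?card_ord // => i _; rewrite cj.
  have : S *+ 10 == 0.
    by rewrite -(addrI S (_ : S + S *+ 10 = S + 0)) // addr0 -mulrS -E.
  by rewrite mulrn_eq0 /= => /eqP.
move/negP: cnz; apply; apply/eqP/rowP => j; rewrite cj S0 mxE //.
Qed.


Definition L10 : seq (seq nat) :=
  [:: [:: 1; 2; 3; 4]; [:: 3; 4; 5; 6]; [:: 5; 6; 7; 8];
      [:: 1; 3; 5; 8; 9; 12]; [:: 1; 4; 5; 7; 9; 12];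
      [:: 1; 4; 5; 8; 9; 11]; [:: 1; 3; 5; 7; 9; 11];
      [:: 1; 1; 3; 4; 11; 12]; [:: 3; 4; 5; 5; 7; 8];
      [:: 7; 8; 9; 9; 11; 12]]%N.
Definition hw (l : seq nat) (j : nat) : int := sumZ [seq GintN (idx k) j | k <- l].
Definition S10 : seq (seq int) := [seq [seq (wq (hw l) k %/ 4)%Z | k <- iota 0 10] | l <- L10].

Lemma S10memb : all (fun l => memb (hw l)) L10.
Proof. vm_compute; reflexivity. Qed.
Lemma S10cls : all (fun s => s \in classes0) S10.
Proof. vm_compute; reflexivity. Qed.
Lemma S10iso : all (fun i => all (fun j =>
   cdotL (nth [::] S10 i) (nth [::] S10 j) == (if (i == j)%N then 0 else 4)) (iota 0 10)) (iota 0 10).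
Proof. vm_compute; reflexivity. Qed.

Lemma quarter (b : bool) :
  (2^-1 * (2^-1 * ((if b then 0 else 4 : int))%:~R) : rat) = (~~ b)%:R.
Proof. by case: b => /=; field. Qed.

Lemma S10_iso : isotropicHF [seq toF s | s <- S10].
Proof.
split.
- move=> f /mapP [s sin ->]; apply/inHFP; exists s => //.
  by rewrite classesE; apply: (allP S10cls).
- move=> i j; rewrite size_map => il jl; rewrite (nth_map [::] _ _ il) (nth_map [::] _ _ jl) cdotE cdotLE.
  have := allP S10iso i; rewrite mem_iota il => /(_ isT) /allP /(_ j).
  rewrite mem_iota jl => /(_ isT) /eqP ->.
  exact: quarter.
Qed.

Definition t1 := [:: (At 3, true); (At 3, true)].
Definition t2 := [:: (At 3, false)].
Definition t3 := [:: (At 5, true)].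
Definition t4 := [:: (At 5, false)].
Definition t5 := [:: (Dt 4, true)].
Definition t6 := [:: (Dt 5, true)].
Definition t7 := [:: (Dt 6, true)].

Lemma key7 : all (fun s => [|| perm_eq (typeL0 s) t1, perm_eq (typeL0 s) t2,
   perm_eq (typeL0 s) t3, perm_eq (typeL0 s) t4, perm_eq (typeL0 s) t5,
   perm_eq (typeL0 s) t6 | perm_eq (typeL0 s) t7]) classes0.
Proof. vm_compute; reflexivity. Qed.

Lemma sz1 : size [seq s <- classes0 | perm_eq (typeL0 s) t1] = 3%N.
Proof. vm_compute; reflexivity. Qed.
Lemma sz2 : size [seq s <- classes0 | perm_eq (typeL0 s) t2] = 24%N.
Proof. vm_compute; reflexivity. Qed.
Lemma sz3 : size [seq s <- classes0 | perm_eq (typeL0 s) t3] = 32%N.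
Proof. vm_compute; reflexivity. Qed.
Lemma sz4 : size [seq s <- classes0 | perm_eq (typeL0 s) t4] = 32%N.
Proof. vm_compute; reflexivity. Qed.
Lemma sz5 : size [seq s <- classes0 | perm_eq (typeL0 s) t5] = 12%N.
Proof. vm_compute; reflexivity. Qed.
Lemma sz6 : size [seq s <- classes0 | perm_eq (typeL0 s) t6] = 24%N.
Proof. vm_compute; reflexivity. Qed.
Lemma sz7 : size [seq s <- classes0 | perm_eq (typeL0 s) t7] = 48%N.
Proof. vm_compute; reflexivity. Qed.

Theorem proposition5p5 :
  (card_is (fun f => inHF f /\ hasType f [:: (At 3, true); (At 3, true)]) 3 /\
      card_is (fun f => inHF f /\ hasType f [:: (At 3, false)]) 24 /\
      card_is (fun f => inHF f /\ hasType f [:: (At 5, true)]) 32 /\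
      card_is (fun f => inHF f /\ hasType f [:: (At 5, false)]) 32 /\
      card_is (fun f => inHF f /\ hasType f [:: (Dt 4, true)]) 12 /\
      card_is (fun f => inHF f /\ hasType f [:: (Dt 5, true)]) 24 /\
      card_is (fun f => inHF f /\ hasType f [:: (Dt 6, true)]) 48) /\
  (forall f, inHF f ->
     (hasType f [:: (At 3, true); (At 3, true)] \/
         hasType f [:: (At 3, false)] \/
         hasType f [:: (At 5, true)] \/
         hasType f [:: (At 5, false)] \/
         hasType f [:: (Dt 4, true)] \/
         hasType f [:: (Dt 5, true)] \/
         hasType f [:: (Dt 6, true)])) /\
  cnd_is 10 /\
  (exists s : seq {ffun 'I_10 -> int},
     isotropicHF s /\
     size s = 10%N /\
     forall i : nat, (i < 10)%N ->
       numeq (vec (nth [ffun => 0] s i))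
         (nth 0
           [:: halfR [:: 1; 2; 3; 4]; halfR [:: 3; 4; 5; 6]; halfR [:: 5; 6; 7; 8];
               halfR [:: 1; 3; 5; 8; 9; 12]; halfR [:: 1; 4; 5; 7; 9; 12];
               halfR [:: 1; 4; 5; 8; 9; 11]; halfR [:: 1; 3; 5; 7; 9; 11];
               halfR [:: 1; 1; 3; 4; 11; 12]; halfR [:: 3; 4; 5; 5; 7; 8];
               halfR [:: 7; 8; 9; 9; 11; 12]] i)).
Proof.
split; [|split; [|split]].
- split; [|split; [|split; [|split; [|split; [|split]]]]]; apply: card_t; rewrite filterE.
  + exact: sz1.
  + exact: sz2.
  + exact: sz3.
  + exact: sz4.
  + exact: sz5.
  + exact: sz6.
  + exact: sz7.
- move=> f /inHFP [s sin ->]; have ss := classes_sz sin.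
  rewrite classesE in sin; move: (allP key7 s sin); rewrite -!typeLE.
  case/orP => [h|/orP [h|/orP [h|/orP [h|/orP [h|/orP [h|h]]]]]].
  + by left; apply/(hasTypeP _ ss).
  + by right; left; apply/(hasTypeP _ ss).
  + by right; right; left; apply/(hasTypeP _ ss).
  + by right; right; right; left; apply/(hasTypeP _ ss).
  + by right; right; right; right; left; apply/(hasTypeP _ ss).
  + by right; right; right; right; right; left; apply/(hasTypeP _ ss).
  + by right; right; right; right; right; right; apply/(hasTypeP _ ss).
- split; last exact: iso_le10.
  by exists [seq toF s | s <- S10]; split; [exact: S10_iso | rewrite size_map].
- exists [seq toF s | s <- S10]; split; first exact: S10_iso.
  split; first by rewrite size_map.
  move=> i il.
  have -> : [:: halfR [:: 1; 2; 3; 4]; halfR [:: 3; 4; 5; 6]; halfR [:: 5; 6; 7; 8];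
               halfR [:: 1; 3; 5; 8; 9; 12]; halfR [:: 1; 4; 5; 7; 9; 12];
               halfR [:: 1; 4; 5; 8; 9; 11]; halfR [:: 1; 3; 5; 7; 9; 11];
               halfR [:: 1; 1; 3; 4; 11; 12]; halfR [:: 3; 4; 5; 5; 7; 8];
               halfR [:: 7; 8; 9; 9; 11; 12]] = map halfR L10 by [].
  have il' : (i < size S10)%N by rewrite size_map.
  have il2 : (i < size L10)%N by [].
  rewrite (nth_map [::] _ _ il') (nth_map [::] 0 halfR il2).
  have -> : toF (nth [::] S10 i) = coordF (hw (nth [::] L10 i)).
    apply/ffunP => k; rewrite /S10 (nth_map [::] _ _ il2) !ffunE.
    by rewrite (nth_map 0%N) ?size_iota // nth_iota.
  apply/numeqP => j; rewrite vec_ip halfR_ip memb_coord //.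
  by apply: (allP S10memb); rewrite mem_nth.
Qed.
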